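(* In the deterministic crowd-learning system with reward rate $\beta>0$, under selfish user behavior and for any initial condition, the average maximum age satisfies $$\overline{\Delta}_{\max}^{(\beta)}\triangleq\limsup_{T\to\infty}\frac1T\sum_{t=0}^{T-1}\mathbb{E}\Big[\max_n\Delta_n[t]\Big]\le N-1+\frac{p_{\max}}{\beta}.$$
   Context: Deterministic crowd-learning model. There are $N\ge 2$ points of interest (PoIs) and time is slotted, $t=0,1,2,\dots$. Each PoI $n$ has a price $p_n[t]\in[p_{\min},p_{\max}]$ with $0<p_{\min}\le p_{\max}$; the price sequence may be arbitrary. The service provider keeps a recorded price $r_n[t]$ for each PoI, with $r_n[0]\in[p_{\min},p_{\max}]$. Each PoI also has an age $\Delta_n[t]$, with finite initial values. In every slot exactly one user arrives and selects one PoI; we write $S_n[t]=1$ if PoI $n$ is selected and $S_n[t]=0$ otherwise. The selected PoI's record is refreshed: $r_n[t+1]=p_n[t]$ if $S_n[t]=1$, and $r_n[t+1]=r_n[t]$ otherwise. Ages evolve as $$\Delta_n[t+1]=(\Delta_n[t]+1)(1-S_n[t]).$$ Selfish behavior with reward rate $\beta>0$: the user in slot $t$ selects $n^*[t]\in\arg\max_n(\beta\Delta_n[t]-r_n[t])$, with ties broken arbitrarily. *)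

(* Defs.v *)
From Stdlib Require Import Reals Lra Lia List.
Import ListNotations.
Open Scope R_scope.

(* PoIs are indexed by n : nat with n < N.
   - p n t   : price of PoI n in slot t
   - r0 n    : initial recorded price r_n[0]
   - D0 n    : initial age Delta_n[0]
   - sel t   : the PoI selected by the user arriving in slot t
               (S_n[t] = 1 iff n = sel t). *)

Definition Sind (sel : nat -> nat) (n t : nat) : bool := Nat.eqb (sel t) n.

Fixpoint rec (p : nat -> nat -> R) (r0 : nat -> R) (sel : nat -> nat)
  (n t : nat) : R :=
  match t with
  | O => r0 n
  | S t' => if Sind sel n t' then p n t' else rec p r0 sel n t'
  end.

Fixpoint age (D0 : nat -> R) (sel : nat -> nat) (n t : nat) : R :=
  match t with
  | O => D0 n
  | S t' => (age D0 sel n t' + 1) * (1 - (if Sind sel n t' then 1 else 0))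
  end.

Definition maxIdx (N : nat) (f : nat -> R) : R :=
  fold_right (fun n acc => Rmax (f n) acc) (f 0%nat) (seq 1 (N - 1)).

Fixpoint sumTo (f : nat -> R) (T : nat) : R :=
  match T with
  | O => 0
  | S T' => sumTo f T' + f T'
  end.

Definition selfish (N : nat) (beta : R) (p : nat -> nat -> R) (r0 D0 : nat -> R)
  (sel : nat -> nat) : Prop :=
  forall t : nat, (sel t < N)%nat /\
    forall m : nat, (m < N)%nat ->
      beta * age D0 sel m t - rec p r0 sel m t
        <= beta * age D0 sel (sel t) t - rec p r0 sel (sel t) t.

Definition limsup_le (u : nat -> R) (L : R) : Prop :=
  forall eps : R, eps > 0 -> exists T0 : nat, forall T : nat, (T >= T0)%nat -> u T <= L + eps.

(* Main.v *)
Require Import Defs.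
From Stdlib Require Import Reals Lra Lia List Classical.
Import ListNotations.
Open Scope R_scope.

Lemma age_S_eq D0 sel n t : age D0 sel n (S t) = (age D0 sel n t + 1) * (1 - (if Sind sel n t then 1 else 0)).
Proof. reflexivity. Qed.

Lemma age_S_sel D0 sel n t : sel t = n -> age D0 sel n (S t) = 0.
Proof. intros H; simpl; unfold Sind; rewrite H, Nat.eqb_refl; ring. Qed.

Lemma age_S_nsel D0 sel n t : sel t <> n -> age D0 sel n (S t) = age D0 sel n t + 1.
Proof. intros H; simpl; unfold Sind; rewrite (proj2 (Nat.eqb_neq _ _) H); ring. Qed.

Lemma rec_bound N pmin pmax p r0 sel n t : (n < N)%nat ->
  (forall n t, (n < N)%nat -> pmin <= p n t <= pmax) ->
  (forall n, (n < N)%nat -> pmin <= r0 n <= pmax) ->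
  pmin <= rec p r0 sel n t <= pmax.
Proof.
  intros Hn Hp Hr; induction t; simpl; auto.
  destruct (Sind sel n t); auto.
Qed.

Lemma age_after_sel D0 sel n u k : sel u = n ->
  age D0 sel n (S u + k) <= INR k.
Proof.
  intros H; induction k.
  - rewrite Nat.add_0_r, (age_S_sel D0 sel n u H). simpl; apply Rle_refl.
  - replace (S u + S k)%nat with (S (S u + k)) by lia.
    rewrite S_INR, age_S_eq.
    pose proof (pos_INR k); destruct (Sind sel n (S u + k)); lra.
Qed.

Lemma age_window D0 sel m t k : (forall j, (j < k)%nat -> sel (t + j)%nat <> m) ->
  age D0 sel m (t + k) = age D0 sel m t + INR k.
Proof.
  induction k; intros H.
  - rewrite Nat.add_0_r; simpl; ring.
  - replace (t + S k)%nat with (S (t + k)) by lia.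
    rewrite age_S_nsel by (apply H; lia).
    rewrite IHk by (intros; apply H; lia). rewrite S_INR; ring.
Qed.

Lemma maxIdx_le N f B : (1 <= N)%nat -> (forall n, (n < N)%nat -> f n <= B) -> maxIdx N f <= B.
Proof.
  intros HN H. unfold maxIdx.
  assert (Hl : forall n, In n (seq 1 (N - 1)) -> f n <= B).
  { intros n Hn; apply in_seq in Hn; apply H; lia. }
  assert (H0 : f 0%nat <= B) by (apply H; lia).
  induction (seq 1 (N - 1)); simpl; auto.
  apply Rmax_lub; [apply Hl; left; auto | apply IHl; intros; apply Hl; right; auto].
Qed.

Lemma key N beta pmin pmax p r0 D0 sel m t :
  beta > 0 ->
  (forall n t, (n < N)%nat -> pmin <= p n t <= pmax) ->
  (forall n, (n < N)%nat -> pmin <= r0 n <= pmax) ->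
  selfish N beta p r0 D0 sel -> (m < N)%nat ->
  age D0 sel m t > (pmax - pmin) / beta - 1 ->
  exists j, (j < N)%nat /\ sel (t + j)%nat = m.
Proof.
  intros Hb Hp Hr Hs Hm Ha.
  apply NNPP; intros Hne.
  assert (Hnot : forall j, (j < N)%nat -> sel (t + j)%nat <> m).
  { intros j Hj E; apply Hne; exists j; auto. }
  assert (Hdist : forall i j, (i < j)%nat -> (j < N)%nat -> sel (t + i)%nat <> sel (t + j)%nat).
  { intros i j Hij HjN E.
    set (s := sel (t + j)%nat) in *.
    destruct (Hs (t + j)%nat) as [HsN Hsel].
    specialize (Hsel m Hm). fold s in Hsel.
    rewrite age_window in Hsel by (intros; apply Hnot; lia).
    assert (Has : age D0 sel s (t + j) <= INR (j - i - 1)).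
    { replace (t + j)%nat with (S (t + i) + (j - i - 1))%nat by lia.
      apply age_after_sel; auto. }
    rewrite minus_INR in Has by lia. rewrite minus_INR in Has by lia.
    change (INR 1) with 1 in Has.
    pose proof (rec_bound N pmin pmax p r0 sel m (t + j) Hm Hp Hr).
    pose proof (rec_bound N pmin pmax p r0 sel s (t + j) HsN Hp Hr).
    assert (Hc : beta * ((pmax - pmin) / beta) = pmax - pmin) by (field; lra).
        assert (INR i >= 0) by (apply Rle_ge, pos_INR).
    assert (beta * age D0 sel s (t + j) <= beta * (INR j - INR i - 1))
      by (apply Rmult_le_compat_l; lra).
    assert (beta * age D0 sel m t > beta * ((pmax - pmin) / beta - 1))
      by (apply Rmult_lt_compat_l; lra).
    nra. }
  set (l := map (fun j => sel (t + j)%nat) (seq 0 N)).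
  assert (Hnd : NoDup l).
  { unfold l. apply NoDup_map_NoDup_ForallPairs; [|apply seq_NoDup].
    intros a b Ha' Hb' E. apply in_seq in Ha'. apply in_seq in Hb'.
    destruct (Nat.lt_trichotomy a b) as [Hab|[Hab|Hab]]; auto.
    - exfalso; apply (Hdist a b); auto; lia.
    - exfalso; apply (Hdist b a); auto; lia. }
  assert (Hinc : incl l (remove Nat.eq_dec m (seq 0 N))).
  { intros x Hx. unfold l in Hx. apply in_map_iff in Hx as [j [Ej Hj]].
    apply in_seq in Hj. subst x. apply in_in_remove.
    - apply Hnot; lia.
    - apply in_seq. destruct (Hs (t + j)%nat); lia. }
  pose proof (NoDup_incl_length Hnd Hinc).
  assert (In m (seq 0 N)) by (apply in_seq; lia).
  pose proof (remove_length_lt Nat.eq_dec (seq 0 N) m H0).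
  unfold l in H; rewrite length_map, length_seq in H; rewrite length_seq in H1. lia.
Qed.

Lemma bound_after N beta pmin pmax p r0 D0 sel m t' :
  beta > 0 -> pmin <= pmax ->
  (forall n t, (n < N)%nat -> pmin <= p n t <= pmax) ->
  (forall n, (n < N)%nat -> pmin <= r0 n <= pmax) ->
  selfish N beta p r0 D0 sel -> (m < N)%nat -> (N <= t')%nat ->
  age D0 sel m t' <= INR N - 1 + (pmax - pmin) / beta.
Proof.
  intros Hb Hle Hp Hr Hs Hm Ht.
  assert (Hc : 0 <= (pmax - pmin) / beta) by (unfold Rdiv; apply Rmult_le_pos; [lra|left; apply Rinv_0_lt_compat; lra]).
  set (t := (t' - N)%nat).
  destruct (classic (exists j, (j < N)%nat /\ sel (t + j)%nat = m)) as [[j [Hj E]]|Hne].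
  - replace t' with (S (t + j) + (N - j - 1))%nat by (unfold t; lia).
    eapply Rle_trans; [apply age_after_sel; exact E|].
    rewrite !minus_INR by lia. change (INR 1) with 1. pose proof (pos_INR j). lra.
  - assert (Hnot : forall j, (j < N)%nat -> sel (t + j)%nat <> m).
    { intros j Hj E; apply Hne; exists j; auto. }
    replace t' with (t + N)%nat by (unfold t; lia).
    rewrite age_window by auto.
    destruct (Rle_lt_dec (age D0 sel m t) ((pmax - pmin) / beta - 1)) as [H|H].
    + lra.
    + exfalso. apply Hne. eapply key; eauto.
Qed.

Lemma sum_mono h T k : (forall t, 0 <= h t) -> sumTo h T <= sumTo h (T + k).
Proof.
  intros H; induction k.
  - rewrite Nat.add_0_r; lra.
  - replace (T + S k)%nat with (S (T + k)) by lia. simpl. specialize (H (T + k)%nat). lra.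
Qed.

Lemma sum_stable h N k : (forall t, (N <= t)%nat -> h t = 0) -> sumTo h (N + k) = sumTo h N.
Proof.
  intros H; induction k.
  - rewrite Nat.add_0_r; auto.
  - replace (N + S k)%nat with (S (N + k)) by lia. simpl. rewrite H by lia. lra.
Qed.

Theorem mainTheorem2 (N : nat) (beta pmin pmax : R)
  (p : nat -> nat -> R) (r0 D0 : nat -> R) (sel : nat -> nat) :
  (2 <= N)%nat -> beta > 0 -> 0 < pmin -> pmin <= pmax ->
  (forall n t, (n < N)%nat -> pmin <= p n t <= pmax) ->
  (forall n, (n < N)%nat -> pmin <= r0 n <= pmax) ->
  (forall n, (n < N)%nat -> 0 <= D0 n) ->
  selfish N beta p r0 D0 sel ->
  limsup_le
    (fun T => / INR T * sumTo (fun t => maxIdx N (fun n => age D0 sel n t)) T)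
    (INR N - 1 + pmax / beta).
Proof.
  intros HN Hb Hpmin Hle Hp Hr HD Hs.
  set (f := fun t => maxIdx N (fun n => age D0 sel n t)).
  set (B := INR N - 1 + pmax / beta).
  assert (HB0 : 0 <= B).
  { unfold B. assert (1 <= INR N) by (change 1 with (INR 1); apply le_INR; lia).
    assert (0 <= pmax / beta) by (unfold Rdiv; apply Rmult_le_pos; [lra|left; apply Rinv_0_lt_compat; lra]). lra. }
  assert (Hf : forall t, (N <= t)%nat -> f t <= B).
  { intros t Ht. unfold f. apply maxIdx_le; [lia|].
    intros n Hn. eapply Rle_trans; [apply (bound_after N beta pmin pmax p r0 D0 sel n t); auto|].
    unfold B. assert ((pmax - pmin) / beta <= pmax / beta).
    { unfold Rdiv. apply Rmult_le_compat_r; [left; apply Rinv_0_lt_compat; lra|lra]. }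
    lra. }
  set (h := fun t => if Nat.ltb t N then Rabs (f t) else 0).
  assert (Hh0 : forall t, 0 <= h t).
  { intros t; unfold h; destruct (Nat.ltb t N); [apply Rabs_pos|lra]. }
  assert (Hsum : forall T, sumTo f T <= sumTo h T + INR T * B).
  { induction T; simpl sumTo; [simpl; lra|].
    rewrite S_INR.
    assert (f T <= h T + B).
    { unfold h. destruct (Nat.ltb T N) eqn:E.
      - pose proof (Rle_abs (f T)); lra.
      - apply Nat.ltb_ge in E. pose proof (Hf T E); lra. }
    lra. }
  set (C := sumTo h N).
  assert (HC : forall T, sumTo h T <= C).
  { intros T. unfold C. destruct (Nat.le_gt_cases T N).
    - pose proof (sum_mono h T (N - T) Hh0) as HM. replace (T + (N - T))%nat with N in HM by lia. exact HM.
    - replace T with (N + (T - N))%nat by lia. rewrite sum_stable; [lra|].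
      intros t Ht. unfold h. destruct (Nat.ltb t N) eqn:E; auto.
      apply Nat.ltb_lt in E; lia. }
  intros eps Heps.
  destruct (INR_archimed eps C Heps) as [n Hn].
  exists (S n). intros T HT.
  assert (HTpos : 0 < INR T) by (apply lt_0_INR; lia).
  assert (HnT : INR n <= INR T) by (apply le_INR; lia).
  assert (Hs' : sumTo f T <= C + INR T * B) by (pose proof (Hsum T); pose proof (HC T); lra).
  fold f.
  apply Rle_trans with (/ INR T * (C + INR T * B)).
  { apply Rmult_le_compat_l; [left; apply Rinv_0_lt_compat; lra|exact Hs']. }
  rewrite Rmult_plus_distr_l.
  replace (/ INR T * (INR T * B)) with B by (field; lra).
  assert (C <= eps * INR T) by nra.
  assert (/ INR T * C <= eps).
  { apply Rmult_le_reg_l with (INR T); auto.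
    rewrite <- Rmult_assoc, Rinv_r by lra. lra. }
  lra.
Qed.
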